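(* For every integer $n\ge2$, the coefficient of $u\,v^{n}w^{n-1}$ in $P_{n/(n+1)}(u,v,w)$ (i.e. the coefficient at the lattice point $(1,n)$ of the Newton polygon) equals $4$.
   Context: Markov polynomials. Let $x,y,z$ be indeterminates. Consider the set consisting of all rationals $\rho\in[0,1]$, each written in lowest terms $\rho=a/b$ with integers $a\ge 0$, $b\ge 1$, together with the formal symbol $1/0$. Define Laurent polynomials $M_\rho(x,y,z)$ recursively by $M_{1/0}=y$, $M_{0/1}=x$, $M_{1/1}=\frac{x^2+y^2}{z}$, and: whenever $a/b$, $c/d$ are in this set with $|ad-bc|=1$ and $(a+2c)/(b+2d)\in[0,1]$, then $M_{\frac{a+2c}{b+2d}}=\big(M_{c/d}^2+M_{\frac{a+c}{b+d}}^2\big)/M_{a/b}$. This determines $M_\rho$ for every rational $\rho\in[0,1]$. Numerator. For coprime $1\le a\le b$, $P_{a/b}(u,v,w)$ denotes the homogeneous polynomial of degree $a+b-1$ such that $M_{a/b}(x,y,z)=P_{a/b}(x^2,y^2,z^2)/(x^{a-1}y^{b-1}z^{a+b-1})$; its existence is known. *)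

(* Defs.v *)
From HB Require Import structures.
From mathcomp Require Import all_boot all_algebra.
From mathcomp Require Import fraction.
From mathcomp Require Import mpoly.

Set Implicit Arguments. Unset Strict Implicit. Unset Printing Implicit Defensive.
Import GRing.Theory.
Local Open Scope ring_scope.

(* Polynomials in three indeterminates (indices 0,1,2) with integer
   coefficients, and their field of fractions, in which the Laurent
   polynomials M_rho live. *)
Definition mpR := {mpoly int[3]}.
Definition Kfrac := {fraction mpR}.

Definition toK (p : mpR) : Kfrac := @FracField.tofrac mpR p.

Definition xK : Kfrac := toK 'X_(0 : 'I_3).
Definition yK : Kfrac := toK 'X_(1 : 'I_3).
Definition zK : Kfrac := toK 'X_(2 : 'I_3).

(* The index set: a/b with a >= 0, b >= 1, gcd(a,b)=1 and a/b in [0,1],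
   together with the formal symbol 1/0 (encoded as the pair (1,0)). *)
Definition in_markov_set (a b : nat) : bool :=
  [&& (1 <= b)%N, (a <= b)%N & coprime a b] || ((a == 1%N) && (b == 0%N)).

Definition unimodular (a b c d : nat) : Prop :=
  (a * d = b * c + 1)%N \/ (b * c = a * d + 1)%N.

(* M : (numerator, denominator) -> Kfrac satisfies the defining recursion
   of the Markov polynomials M_rho. *)
Definition is_markov_family (M : nat -> nat -> Kfrac) : Prop :=
  [/\ M 1%N 0%N = yK, M 0%N 1%N = xK,
      M 1%N 1%N = (xK ^+ 2 + yK ^+ 2) / zK &
      forall a b c d : nat,
        in_markov_set a b -> in_markov_set c d -> unimodular a b c d ->
        (1 <= b + 2 * d)%N -> (a + 2 * c <= b + 2 * d)%N ->
        M (a + 2 * c)%N (b + 2 * d)%N =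
          (M c d ^+ 2 + M (a + c)%N (b + d)%N ^+ 2) / M a b].

Definition sq_subst : 3.-tuple mpR :=
  [tuple ('X_(0 : 'I_3) : mpR) ^+ 2; ('X_(1 : 'I_3) : mpR) ^+ 2;
         ('X_(2 : 'I_3) : mpR) ^+ 2].

Definition is_markov_numerator (M : nat -> nat -> Kfrac) (a b : nat)
    (P : mpR) : Prop :=
  P \is (a + b - 1)%N.-homog /\
  M a b = toK (P \mPo sq_subst) /
            (xK ^+ (a - 1) * yK ^+ (b - 1) * zK ^+ (a + b - 1)).

(* Main.v *)
Require Import Defs.
From HB Require Import structures.
From mathcomp Require Import all_boot all_algebra.
From mathcomp Require Import fraction.
From mathcomp Require Import mpoly.
From mathcomp Require Import ring zify.
Set Implicit Arguments. Unset Strict Implicit. Unset Printing Implicit Defensive.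
Import GRing.Theory.
Local Open Scope ring_scope.

Definition mi (i j l : nat) : 'X_{1..3} := [multinom [tuple i; j; l]].
Definition mon (i j l : nat) : mpR := 'X_[mi i j l].
Definition cf (p : mpR) i j l := p@_(mi i j l).

Lemma mi_eq a b c i j l : (mi a b c == mi i j l) = [&& a == i, b == j & c == l].
Proof. by rewrite /mi -val_eqE /= -val_eqE /= eqseq_cons eqseq_cons eqseq_cons andbT. Qed.

Lemma mi_app a b c (x : 'I_3) : mi a b c x = nth 0%N [:: a; b; c] x.
Proof. by rewrite /mi multinomE (tnth_nth 0%N). Qed.

Lemma cfmon a b c i j l : cf (mon a b c) i j l = [&& a == i, b == j & c == l]%:R.
Proof. by rewrite /cf /mon mcoeffX mi_eq. Qed.

Lemma cfmon0 a b c i j l : ~ (a = i /\ b = j /\ c = l) -> cf (mon a b c) i j l = 0.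
Proof.
move=> H; rewrite cfmon; case: eqP => // ?; case: eqP => // ?; case: eqP => // ?.
by exfalso; apply: H.
Qed.

Lemma cfmon1 a b c i j l : a = i -> b = j -> c = l -> cf (mon a b c) i j l = 1.
Proof. by move=> -> -> ->; rewrite cfmon !eqxx. Qed.

Lemma cfD p q i j l : cf (p + q) i j l = cf p i j l + cf q i j l.
Proof. exact: mcoeffD. Qed.
Lemma cfB p q i j l : cf (p - q) i j l = cf p i j l - cf q i j l.
Proof. exact: mcoeffB. Qed.

Fact le3_key : unit. Proof. exact: tt. Qed.
Definition le3 (a b c i j l : nat) := locked_with le3_key [&& (a <= i)%N, (b <= j)%N & (c <= l)%N].
Lemma le3E a b c i j l : le3 a b c i j l = [&& (a <= i)%N, (b <= j)%N & (c <= l)%N].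
Proof. by rewrite /le3 unlock. Qed.

Lemma cfM p a b c i j l : cf (p * mon a b c) i j l =
  if le3 a b c i j l then cf p (i - a) (j - b) (l - c) else 0.
Proof.
rewrite /cf /mon le3E; case: ifP => H.
  have -> : mi i j l = (mi a b c + mi (i - a) (j - b) (l - c))%MM.
    apply/mnmP => x; rewrite mnmDE !mi_app.
    move: H => /and3P [h1 h2 h3].
    case: x => [[|[|[|x]]] hx] //=; lia.
  by rewrite mcoeffMX.
apply/eqP; rewrite mcoeff_eq0 (perm_mem (msuppMX _ _)).
apply/mapP => [[m' _ E]].
move: H; have := congr1 (fun m : 'X_{1..3} => m (0 : 'I_3)) E.
have := congr1 (fun m : 'X_{1..3} => m (1 : 'I_3)) E.
have := congr1 (fun m : 'X_{1..3} => m (2 : 'I_3)) E.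
rewrite !mnmDE !mi_app /= => -> -> ->.
by rewrite !leq_addr.
Qed.

Lemma monE a b c : mon a b c = 'X_(0 : 'I_3) ^+ a * 'X_(1 : 'I_3) ^+ b * 'X_(2 : 'I_3) ^+ c.
Proof.
rewrite /mon mpolyXE_id !big_ord_recl big_ord0 mulr1 !mi_app /= mulrA.
have e1 : lift ord0 ord0 = 1 :> 'I_3 by apply/val_inj.
have e2 : lift ord0 (lift ord0 ord0) = 2 :> 'I_3 by apply/val_inj.
by rewrite e1 e2.
Qed.

Definition Tp : mpR := mon 0 4 0 + mon 0 2 2 + mon 2 0 2 + mon 2 2 0 + mon 2 2 0 + mon 4 0 0.
Definition Wp : mpR := mon 2 2 4.
Definition R0 : mpR := mon 2 0 0.
Definition R1 : mpR := mon 4 0 2 + mon 6 0 0 + mon 4 2 0 + mon 4 2 0 + mon 2 4 0.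
Fixpoint R (k : nat) : mpR :=
  match k with 0 => R0 | 1 => R1 | (k'.+1 as k1).+1 => R k1 * Tp - R k' * Wp end.
Lemma RS k : R k.+2 = R k.+1 * Tp - R k * Wp. Proof. by []. Qed.

Lemma ifz (b : bool) (x : int) : (b -> x = 0) -> (if b then x else 0) = 0.
Proof. by case: b => // ->. Qed.

Lemma cfR k i j l : cf (R k.+2) i j l =
  (if le3 0 4 0 i j l then cf (R k.+1) (i - 0) (j - 4) (l - 0) else 0) +
  (if le3 0 2 2 i j l then cf (R k.+1) (i - 0) (j - 2) (l - 2) else 0) +
  (if le3 2 0 2 i j l then cf (R k.+1) (i - 2) (j - 0) (l - 2) else 0) +
  (if le3 2 2 0 i j l then cf (R k.+1) (i - 2) (j - 2) (l - 0) else 0) +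
  (if le3 2 2 0 i j l then cf (R k.+1) (i - 2) (j - 2) (l - 0) else 0) +
  (if le3 4 0 0 i j l then cf (R k.+1) (i - 4) (j - 0) (l - 0) else 0) -
  (if le3 2 2 4 i j l then cf (R k) (i - 2) (j - 2) (l - 4) else 0).
Proof. by rewrite RS /Tp /Wp !mulrDr cfB !cfD !cfM. Qed.

Definition SupP k := forall i j l, ((i < 2) \/ (i <= 4 /\ 2 * k - 2 < l))%N -> cf (R k) i j l = 0.

Definition SupW k := forall i j l, ((i < 2) \/ (i <= 2 /\ 2 * k - 2 < l))%N -> cf (R k) i j l = 0.

Lemma SupW1 : SupW 1.
Proof. move=> i j l H; rewrite /R /R1 !cfD !cfmon0 ?addr0 // => -[? [? ?]]; subst; lia. Qed.

Lemma R2E : R 2 = mon 2 6 2 + mon 2 8 0 + mon 4 4 2 *+ 4 + mon 4 6 0 *+ 4 + mon 6 0 4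
  + mon 6 2 2 *+ 5 + mon 6 4 0 *+ 6 + mon 8 0 2 *+ 2 + mon 8 2 0 *+ 4 + mon 10 0 0.
Proof. rewrite RS /= /R1 /R0 /Tp /Wp !monE; ring. Qed.

Lemma cfMn p c i j l : cf (p *+ c) i j l = cf p i j l *+ c.
Proof. exact: mcoeffMn. Qed.

Lemma Sup2 : SupP 2.
Proof. move=> i j l H; rewrite R2E !cfD !cfmon0 ?addr0 // => -[? [? ?]]; subst; lia. Qed.

Lemma SupS k : (1 <= k)%N -> SupW k -> SupP k.+1 -> SupP k.+2.
Proof.
move=> hk IH0 IH1 i j l H; rewrite cfR.
rewrite !ifz ?subr0 ?addr0 //.
all: rewrite le3E => /and3P [? ? ?]; first [apply: IH1 | apply: IH0]; lia.
Qed.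

Lemma SupAll k : (2 <= k)%N -> SupP k.
Proof.
have : forall m, (1 <= m)%N -> SupW m /\ SupP m.+1.
  elim=> // -[|m] IH _.
    by split; [exact: SupW1 | exact: Sup2].
  have [h0 h1] := IH isT; split.
    by move=> i j l H; apply: h1; lia.
  exact: SupS.
move=> H; case: k => // k hk; by case: (H k).
Qed.

Lemma SupWAll k : (1 <= k)%N -> SupW k.
Proof.
case: k => // -[|k] _; first exact: SupW1.
move=> i j l H; apply: (SupAll (k := k.+2)) => //; lia.
Qed.

Lemma Zero0 k i j l : (i < 2)%N -> cf (R k) i j l = 0.
Proof.
case: k => [|k] H; last by apply: SupWAll => //; lia.
by rewrite /R /R0 cfmon0 //; lia.
Qed.

Lemma ifT2 (b : bool) (x y : int) : b -> x = y -> (if b then x else 0) = y.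
Proof. by move=> -> ->. Qed.

Lemma cfE p i j l i' j' l' : i = i' -> j = j' -> l = l' -> cf p i j l = cf p i' j' l'.
Proof. by move=> -> -> ->. Qed.

Lemma A1 : cf (R 1) 2 4 0 = 1.
Proof. by rewrite /R /R1 !cfD !cfmon /= !add0r. Qed.

Lemma A2 : cf (R 2) 2 6 2 = 1.
Proof. by rewrite R2E !cfD !cfmon /=. Qed.

Lemma M2 : cf (R 2) 4 4 2 = 4.
Proof. by rewrite R2E !cfD !cfmon /=. Qed.

Lemma Afact k : (1 <= k)%N -> cf (R k) 2 (2 * k + 2) (2 * k - 2) = 1.
Proof.
elim: k => // -[|[|k]] IH _; [exact: A1 | exact: A2 |].
have IH1 := IH isT.
rewrite cfR.
rewrite [X in _ + X + _ + _ + _ + _ - _](@ifT2 _ _ 1); last first.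
- by rewrite -IH1; apply: cfE; lia.
- rewrite le3E; lia.
rewrite !ifz ?subr0 ?addr0 ?add0r //.
all: rewrite le3E => /and3P [? ? ?].
all: first [ apply: Zero0; lia | apply: (SupAll (k := k.+2)) => //; lia | idtac ].
Qed.


Lemma Mfact k : (2 <= k)%N -> cf (R k) 4 (2 * k) (2 * k - 2) = 4.
Proof.
elim: k => // -[|[|k]] IH hk //; first exact: M2.
have IH1 := IH isT.
rewrite cfR.
rewrite [X in _ + X + _ + _ + _ + _ - _](@ifT2 _ _ 4); last first.
- by rewrite -IH1; apply: cfE; lia.
- rewrite le3E; lia.
rewrite [X in _ + _ + X + _ + _ + _ - _](@ifT2 _ _ 1); last first.
- rewrite -(Afact (k := k.+2)) //; apply: cfE; lia.
- rewrite le3E; lia.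
rewrite [X in _ - X](@ifT2 _ _ 1); last first.
- rewrite -(Afact (k := k.+1)) //; apply: cfE; lia.
- rewrite le3E; lia.
rewrite !ifz ?subr0 ?addr0 ?add0r.
all: try (rewrite le3E => /and3P [? ? ?]).
all: first [ apply: Zero0; lia | apply: (SupAll (k := k.+2)) => //; lia | idtac ].
by rewrite addrK.
Qed.

Lemma tnth_sq (x : 'I_3) : tnth sq_subst x = 'X_x ^+ 2.
Proof.
case: x => [[|[|[|x]]] hx] //=; congr ('X_ _ ^+ 2); by apply/val_inj.
Qed.

Lemma compX (m : 'X_{1..3}) : 'X_[m] \mPo sq_subst = 'X_[(m + m)%MM].
Proof.
rewrite comp_mpolyX [RHS]mpolyXE_id; apply: eq_bigr => x _.
by rewrite tnth_sq mnmDE -exprM mul2n addnn.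
Qed.

Lemma dbl_eq (m : 'X_{1..3}) i j l :
  ((m + m)%MM == mi (2 * i) (2 * j) (2 * l)) = (m == mi i j l).
Proof.
apply/eqP/eqP => h.
  apply/mnmP => x; have := congr1 (fun m : 'X_{1..3} => m x) h.
  rewrite mnmDE !mi_app; case: x => [[|[|[|x]]] hx] //= ; lia.
apply/mnmP => x; rewrite mnmDE h !mi_app; case: x => [[|[|[|x]]] hx] //=; lia.
Qed.

Lemma cf_comp P i j l : cf (P \mPo sq_subst) (2 * i) (2 * j) (2 * l) = cf P i j l.
Proof.
rewrite /cf comp_mpolyEX raddf_sum /= [in RHS](mpolyE P) raddf_sum /=.
apply: eq_bigr => m _.
by rewrite !mcoeffZ compX !mcoeffX dbl_eq.
Qed.

Lemma R_neq0 k : R k != 0.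
Proof.
apply/eqP => h.
case: k h => [|k] h.
  have := cfmon1 (a:=2) (b:=0) (c:=0) (erefl 2%N) (erefl 0%N) (erefl 0%N).
  by rewrite -/R0 -[R0]/(R 0) h /cf mcoeff0.
have := Afact (k := k.+1) isT; by rewrite h /cf mcoeff0.
Qed.

Lemma Xi_neq0 a b c : mon a b c != 0.
Proof.
apply/eqP => h; have := cfmon1 (a:=a) (b:=b) (c:=c) (erefl a) (erefl b) (erefl c).
by rewrite h /cf mcoeff0.
Qed.

Lemma toK_mon a b c : toK (mon a b c) = xK ^+ a * yK ^+ b * zK ^+ c.
Proof. by rewrite monE /toK !tofracM !tofracXn. Qed.

Lemma xK_neq0 : xK != 0.
Proof.
have := Xi_neq0 1 0 0; rewrite monE !expr0 !mulr1 expr1 => h.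
by rewrite /xK /toK tofrac_eq0.
Qed.
Lemma yK_neq0 : yK != 0.
Proof.
have := Xi_neq0 0 1 0; rewrite monE !expr0 mulr1 mul1r expr1 => h.
by rewrite /yK /toK tofrac_eq0.
Qed.
Lemma zK_neq0 : zK != 0.
Proof.
have := Xi_neq0 0 0 1; rewrite monE !expr0 !mul1r expr1 => h.
by rewrite /zK /toK tofrac_eq0.
Qed.

Lemma Rinv k : R k.+2 * R k - R k.+1 ^+ 2 = Wp ^+ k * (R 2 * R 0 - R 1 ^+ 2).
Proof.
elim: k => [|k IH]; first by rewrite expr0 mul1r.
rewrite [Wp ^+ k.+1]exprS -mulrA -IH (RS k.+1) (RS k); ring.
Qed.

Lemma Rbase : R 2 * R 0 - R 1 ^+ 2 = mon 4 2 2 * (mon 2 0 0 + mon 0 2 0) ^+ 2.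
Proof. rewrite RS /= /R1 /R0 /Tp /Wp !monE; ring. Qed.

Definition S k := toK (R k).
Definition D k := xK ^+ k.+1 * yK ^+ k * zK ^+ (2 * k).

Lemma Srel k : S k.+2 * S k = S k.+1 ^+ 2 +
  (xK ^+ k) ^+ 2 * (yK ^+ k) ^+ 2 * (zK ^+ k) ^+ 4 *
  (xK ^+ 4 * yK ^+ 2 * zK ^+ 2 * (xK ^+ 2 + yK ^+ 2) ^+ 2).
Proof.
rewrite /S; have := Rinv k; rewrite Rbase /Wp.
move: (R k.+2) (R k.+1) (R k) => a b c h.
have := congr1 toK h; rewrite /toK.
rewrite !(tofracB, tofracM, tofracXn, tofracD) -!/(toK _) !toK_mon.
move=> h2; rewrite -[LHS](subrK (toK b ^+ 2)) h2 addrC; congr (_ + _).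
rewrite !exprMn; ring.
Qed.

Lemma S_neq0 k : S k != 0.
Proof. by rewrite /S /toK tofrac_eq0 R_neq0. Qed.

Lemma S0E : S 0 = xK ^+ 2.
Proof. by rewrite /S /= /R0 toK_mon !expr0 !mulr1. Qed.

Lemma S1E : S 1 = xK ^+ 4 * zK ^+ 2 + xK ^+ 6 + xK ^+ 4 * yK ^+ 2 + xK ^+ 4 * yK ^+ 2 + xK ^+ 2 * yK ^+ 4.
Proof. by rewrite /S /= /R1 /toK !tofracD -!/(toK _) !toK_mon !expr0 !mulr1. Qed.

Lemma alg1 (F : fieldType) (x y z : F) : x != 0 -> y != 0 -> z != 0 ->
  (x ^+ 2 + ((x ^+ 2 + y ^+ 2) / z) ^+ 2) / y =
  (x ^+ 4 * z ^+ 2 + x ^+ 6 + x ^+ 4 * y ^+ 2 + x ^+ 4 * y ^+ 2 + x ^+ 2 * y ^+ 4) /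
  (x ^+ 2 * y ^+ 1 * z ^+ 2).
Proof. move=> hx hy hz; field; by rewrite hx hy hz. Qed.

Lemma alg2 (F : fieldType) (x y z a b c s0 s1 s2 d0 d1 d2 : F) :
  x != 0 -> y != 0 -> z != 0 -> a != 0 -> b != 0 -> c != 0 -> s0 != 0 ->
  d0 = x * a * b * c ^+ 2 -> d1 = x ^+ 2 * a * (y * b) * (z ^+ 2 * c ^+ 2) ->
  d2 = x ^+ 3 * a * (y ^+ 2 * b) * (z ^+ 4 * c ^+ 2) ->
  s2 * s0 = s1 ^+ 2 + a ^+ 2 * b ^+ 2 * c ^+ 4 * (x ^+ 4 * y ^+ 2 * z ^+ 2 * (x ^+ 2 + y ^+ 2) ^+ 2) ->
  (((x ^+ 2 + y ^+ 2) / z) ^+ 2 + (s1 / d1) ^+ 2) / (s0 / d0) = s2 / d2.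
Proof.
move=> hx hy hz ha hb hc hs -> -> -> h.
have -> : s2 = (s1 ^+ 2 + a ^+ 2 * b ^+ 2 * c ^+ 4 * (x ^+ 4 * y ^+ 2 * z ^+ 2 * (x ^+ 2 + y ^+ 2) ^+ 2)) / s0.
  by rewrite -h mulfK.
field; by rewrite hx hy hz ha hb hc hs.
Qed.

Lemma zE k : zK ^+ (2 * k) = (zK ^+ k) ^+ 2.
Proof. by rewrite mulnC exprM. Qed.
Lemma DE k : D k = xK * xK ^+ k * yK ^+ k * (zK ^+ k) ^+ 2.
Proof. rewrite /D zE exprS; ring. Qed.
Lemma DE1 k : D k.+1 = xK ^+ 2 * xK ^+ k * (yK * yK ^+ k) * (zK ^+ 2 * (zK ^+ k) ^+ 2).
Proof. rewrite /D !mulnS !exprD !exprS; ring. Qed.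
Lemma DE2 k : D k.+2 = xK ^+ 3 * xK ^+ k * (yK ^+ 2 * yK ^+ k) * (zK ^+ 4 * (zK ^+ k) ^+ 2).
Proof. rewrite /D !mulnS !exprD !exprS; ring. Qed.

Lemma MS (M : nat -> nat -> Kfrac) (HM : is_markov_family M) k : M k k.+1 = S k / D k.
Proof.
case: HM => H10 H01 H11 H4.
have hx := xK_neq0; have hy := yK_neq0; have hz := zK_neq0.
suff : M k k.+1 = S k / D k /\ M k.+1 k.+2 = S k.+1 / D k.+1 by case.
elim: k => [|k [IH0 IH1]].
  split.
    rewrite H01 S0E /D !expr0 !mulr1 expr1 expr2 (mulfK hx); reflexivity.
  have := H4 1%N 0%N 0%N 1%N isT isT (or_introl erefl) isT isT.
  rewrite H10 H01 H11 => ->.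
  rewrite S1E (_ : D 1 = xK ^+ 2 * yK ^+ 1 * zK ^+ 2); last by rewrite /D.
  exact: (alg1 hx hy hz).
split => //.
have hin : in_markov_set k k.+1 by rewrite /in_markov_set leqnSn coprimenS.
have hun : unimodular k k.+1 1 1 by right; lia.
have := H4 k k.+1 1%N 1%N hin isT hun ltac:(lia) ltac:(lia).
have e1 : (k + 2 * 1)%N = k.+2 by lia.
have e2 : (k.+1 + 2 * 1)%N = k.+3 by lia.
have e3 : (k + 1)%N = k.+1 by lia.
have e4 : (k.+1 + 1)%N = k.+2 by lia.
rewrite e1 e2 e3 e4 H11 IH0 IH1 => ->.
exact: (alg2 hx hy hz (expf_neq0 k hx) (expf_neq0 k hy) (expf_neq0 k hz) (S_neq0 k)
  (DE k) (DE1 k) (DE2 k) (Srel k)).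
Qed.

Lemma alg3 (F : fieldType) (q s a b c x2 : F) :
  a != 0 -> b != 0 -> c != 0 -> x2 != 0 ->
  q / (a * b * c) = s / (a * x2 * b * c) -> q * x2 = s.
Proof.
move=> ha hb hc hx h.
have -> : q = q / (a * b * c) * (a * b * c) by field; rewrite ha hb hc.
rewrite h; field; by rewrite ha hb hc hx.
Qed.

Theorem theorem9p1 (M : nat -> nat -> Kfrac) (HM : is_markov_family M)
    (n : nat) (hn : (2 <= n)%N) (P : mpR)
    (HP : is_markov_numerator M n n.+1 P) :
  P@_[multinom [tuple 1%N; n; n.-1]] = 4.
Proof.
case: HP => _ HPe.
have hx := xK_neq0; have hy := yK_neq0; have hz := zK_neq0.
have e := MS HM n.
rewrite HPe /D in e.
rewrite (_ : (n.+1 - 1)%N = n) in e; last lia.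
rewrite (_ : (n + n.+1 - 1)%N = (2 * n)%N) in e; last lia.
rewrite (_ : xK ^+ n.+1 = xK ^+ (n - 1) * xK ^+ 2) in e; last first.
  rewrite -exprD; congr (_ ^+ _); lia.
have key := alg3 (expf_neq0 _ hx) (expf_neq0 _ hy) (expf_neq0 _ hz) (expf_neq0 _ hx) e.
have hQ : (P \mPo sq_subst) * mon 2 0 0 = R n.
  apply/eqP; rewrite -tofrac_eq; apply/eqP.
  rewrite monE !expr0 !mulr1 [LHS]tofracM tofracXn.
  exact: key.
change (cf P 1 n n.-1 = 4).
rewrite -cf_comp (_ : cf (P \mPo sq_subst) (2 * 1) (2 * n) (2 * n.-1) =
   cf ((P \mPo sq_subst) * mon 2 0 0) 4 (2 * n) (2 * n - 2)).
  by rewrite hQ Mfact.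
rewrite cfM (_ : le3 2 0 0 4 (2 * n) (2 * n - 2) = true); last first.
  rewrite le3E; apply/and3P; split; lia.
apply: cfE; lia.
Qed.
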